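(* For any global correlation value $r \in (0,1)$ and any recovery targets $\rho_1,\rho_2 \in [0,1]$ with $\rho_1<\rho_2$, there exist data-generating processes $P_1$ and $P_2$ for (prompt, candidate scores, oracle utilities) such that $\mathrm{Corr}_{P_1}(S,O)=\mathrm{Corr}_{P_2}(S,O)=r$, while $\mathrm{Recovery}(P_1)=\rho_1$ and $\mathrm{Recovery}(P_2)=\rho_2$.
   Context: A data-generating process draws prompts $x$ and, for each prompt, $n\ge 2$ candidates $i\in\{1,\dots,n\}$, each with a judge score $S_{x,i}\in\mathbb{R}$ and an oracle utility $O_{x,i}\in\mathbb{R}$. $\mathrm{Corr}(S,O)$ denotes the global (Pearson) correlation over all (prompt, candidate) pairs. Write $S_{x,i}=\mu^S_x+\varepsilon^S_{x,i}$ and $O_{x,i}=\mu^O_x+\varepsilon^O_{x,i}$, where $\mu^S_x,\mu^O_x$ are prompt-level means and $\varepsilon^S_{x,i},\varepsilon^O_{x,i}$ are within-prompt deviations. Selection strategies for a prompt: judge-greedy picks $\arg\max_i S_{x,i}$ (uniform random tie-breaking among tied maxima), random picks a uniformly random candidate, oracle picks $\arg\max_i O_{x,i}$. Recovery is $\mathrm{Recovery}=\dfrac{\mathbb{E}[O_{\text{judge}}]-\mathbb{E}[O_{\text{random}}]}{\mathbb{E}[O_{\text{oracle}}]-\mathbb{E}[O_{\text{random}}]}$, where $O_{\text{judge}},O_{\text{random}},O_{\text{oracle}}$ are the oracle utilities of the candidates selected by the respective strategies (assuming the denominator is positive). *)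

(* Defs.v *)
From HB Require Import structures.
From mathcomp Require Import all_boot all_order all_algebra.
From mathcomp Require Import reals.
Set Implicit Arguments. Unset Strict Implicit. Unset Printing Implicit Defensive.
Import Order.TTheory GRing.Theory Num.Theory.
Local Open Scope ring_scope.

(* A (finitely supported) data-generating process: prompts x : 'I_m drawn with
   probability w x; each prompt has n candidates i : 'I_n with judge score
   S x i and oracle utility O x i. *)
Record dgp (R : realType) := DGP {
  nprompt : nat;
  ncand : nat;
  pw : 'I_nprompt -> R;
  sc : 'I_nprompt -> 'I_ncand -> R;
  ou : 'I_nprompt -> 'I_ncand -> R }.
Arguments nprompt {R} d.
Arguments ncand {R} d.
Arguments pw {R} d _.
Arguments sc {R} d _ _.
Arguments ou {R} d _ _.

Section DGP.
Variables (R : realType) (P : dgp R).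

Definition dgp_valid : Prop :=
  (2 <= ncand P)%N /\ (forall x, 0 <= pw P x) /\ \sum_x pw P x = 1.

Definition Epair (f : 'I_(nprompt P) -> 'I_(ncand P) -> R) : R :=
  \sum_x pw P x * ((\sum_i f x i) / (ncand P)%:R).

Definition meanS := Epair (sc P).
Definition meanO := Epair (ou P).
Definition covSO := Epair (fun x i => (sc P x i - meanS) * (ou P x i - meanO)).
Definition varS := Epair (fun x i => (sc P x i - meanS) ^+ 2).
Definition varO := Epair (fun x i => (ou P x i - meanO) ^+ 2).
Definition corrSO := covSO / Num.sqrt (varS * varO).

Definition argmaxset (F : 'I_(nprompt P) -> 'I_(ncand P) -> R) x :
  {set 'I_(ncand P)} := [set i | [forall j, F x j <= F x i]].

(* expected oracle utility when picking argmax of F with uniform random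
   tie-breaking *)
Definition Egreedy (F : 'I_(nprompt P) -> 'I_(ncand P) -> R) : R :=
  \sum_x pw P x *
    ((\sum_(i in argmaxset F x) ou P x i) / (#|argmaxset F x|)%:R).

Definition E_judge := Egreedy (sc P).
Definition E_oracle := Egreedy (ou P).
Definition E_random := Epair (ou P).

Definition recovery := (E_judge - E_random) / (E_oracle - E_random).

End DGP.

(* Main.v *)
Require Import Defs.
From HB Require Import structures.
From mathcomp Require Import all_boot all_order all_algebra.
From mathcomp Require Import reals.
From mathcomp Require Import ring lra.
Import Order.TTheory GRing.Theory Num.Theory.
Local Open Scope ring_scope.

Section Aux.
Variable R : realType.

Lemma I2_cases (i : 'I_2) : i = ord0 \/ i = ord_max.
Proof. case: i => [[|[|//]] Hi]; [left|right]; exact: val_inj. Qed.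

Lemma forall_I2 (p : pred 'I_2) : [forall j, p j] = p ord0 && p ord_max.
Proof.
apply/forallP/andP => [H|[H0 H1] j]; first by split; apply: H.
by case: (I2_cases j) => ->.
Qed.

Lemma sum_in_I2 (A : {set 'I_2}) (O : 'I_2 -> R) :
  \sum_(i in A) O i = (if ord0 \in A then O ord0 else 0) +
                      (if ord_max \in A then O ord_max else 0).
Proof.
rewrite big_mkcond !big_ord_recl big_ord0 /= addr0.
by have -> : lift ord0 (ord0 : 'I_1) = ord_max by apply: val_inj.
Qed.

Lemma greedy2_le (F O : 'I_2 -> R) :
  F ord_max <= F ord0 -> (F ord_max = F ord0 -> O ord_max = O ord0) ->
  (\sum_(i in [set i | [forall j, F j <= F i]]) O i) /
     (#|[set i | [forall j, F j <= F i]]|)%:R = O ord0.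
Proof.
move=> h hO.
move: h; rewrite le_eqVlt => /orP [/eqP e| lt].
- have -> : [set i | [forall j, F j <= F i]] = [set: 'I_2].
    apply/setP => i; rewrite !inE forall_I2 e.
    case: (I2_cases i) => ->; rewrite /= ?e; by rewrite le_refl. 
  rewrite cardsT card_ord sum_in_I2 !inE hO //.
  by field.
- have -> : [set i | [forall j, F j <= F i]] = [set ord0].
    apply/setP => i; rewrite !inE forall_I2.
    case: (I2_cases i) => ->; rewrite /= ?le_refl ?andbT.
      by rewrite eqxx (ltW lt).
    by rewrite leNgt lt.
  by rewrite big_set1 cards1 divr1.
Qed.

Lemma greedy2_eq (F O : 'I_2 -> R) :
  F ord_max = F ord0 ->
  (\sum_(i in [set i | [forall j, F j <= F i]]) O i) /
     (#|[set i | [forall j, F j <= F i]]|)%:R = (O ord0 + O ord_max) / 2.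
Proof.
move=> e.
have -> : [set i | [forall j, F j <= F i]] = [set: 'I_2].
  apply/setP => i; rewrite !inE forall_I2 e.
  by case: (I2_cases i) => ->; rewrite /= ?e ?le_refl.
by rewrite cardsT card_ord sum_in_I2 !inE.
Qed.


Definition sel2 (u v : R) (i : 'I_2) : R := if val i == 0%N then u else v.
Definition sel3 {T : Type} (u v t : T) (x : 'I_3) : T :=
  if val x == 0%N then u else if val x == 1%N then v else t.

Definition mkP (a w x rho : R) : dgp R :=
  @DGP R 3 2 (sel3 (1/4) (1/4) (1/2))
    (sel3 (sel2 (a+x) (a-x)) (sel2 (-a) (-a)) (sel2 w (-w)))
    (sel3 (sel2 (a+rho) (a-rho)) (sel2 (-a+(1-rho)) (-a-(1-rho))) (sel2 0 0)).

Variables (a w x rho : R).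
Let P := mkP a w x rho.

Lemma meanS0 : meanS P = 0.
Proof. rewrite /meanS /Epair !big_ord_recl !big_ord0 /= /sel3 /sel2 /=. by field. Qed.
Lemma meanO0 : meanO P = 0.
Proof. rewrite /meanO /Epair !big_ord_recl !big_ord0 /= /sel3 /sel2 /=. by field. Qed.
Lemma varS_eq : varS P = a^+2/2 + x^+2/4 + w^+2/2.
Proof. rewrite /varS meanS0 /Epair !big_ord_recl !big_ord0 /= /sel3 /sel2 /=. by field. Qed.
Lemma varO_eq : varO P = a^+2/2 + (rho^+2 + (1-rho)^+2)/4.
Proof. rewrite /varO meanO0 /Epair !big_ord_recl !big_ord0 /= /sel3 /sel2 /=. by field. Qed.
Lemma cov_eq : covSO P = a^+2/2 + x*rho/4.
Proof. rewrite /covSO meanO0 meanS0 /Epair !big_ord_recl !big_ord0 /= /sel3 /sel2 /=. by field. Qed.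
Lemma Erand_eq : E_random P = 0.
Proof. exact: meanO0. Qed.

Ltac side := rewrite /= /sel3 /sel2 /=; try (move=> ?); lra.

Lemma Ejudge_eq : 0 < x -> 0 <= w -> E_judge P = rho/4.
Proof.
move=> hx hw.
rewrite /E_judge /Egreedy !big_ord_recl !big_ord0 /argmaxset.
rewrite (@greedy2_le (sc P ord0) (ou P ord0)); try side.
rewrite (@greedy2_eq (sc P (lift ord0 ord0)) (ou P (lift ord0 ord0))); try side.
rewrite (@greedy2_le (sc P (lift ord0 (lift ord0 ord0))) (ou P (lift ord0 (lift ord0 ord0)))); try side.
all: rewrite /= /sel3 /sel2 /=; by field.
Qed.

Lemma Eoracle_eq : 0 <= rho <= 1 -> E_oracle P = 1/4.
Proof.
move=> /andP [h0 h1].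
rewrite /E_oracle /Egreedy !big_ord_recl !big_ord0 /argmaxset.
rewrite (@greedy2_le (ou P ord0) (ou P ord0)); try side.
rewrite (@greedy2_le (ou P (lift ord0 ord0)) (ou P (lift ord0 ord0))); try side.
rewrite (@greedy2_le (ou P (lift ord0 (lift ord0 ord0))) (ou P (lift ord0 (lift ord0 ord0)))); try side.
all: rewrite /= /sel3 /sel2 /=; by field.
Qed.
End Aux.

Lemma covalg (R : realType) (r rho Q A : R) : r < 1 ->
  A = r*(2*Q-rho)/(4*(1-r)) -> A/2 + (r/2)*rho/4 = r*(A/2+Q/4).
Proof.
move=> r1 ->. field. by rewrite subr_eq0 eq_sym lt_eqF.
Qed.

Lemma construct (R : realType) (r rho : R) :
  0 < r < 1 -> 0 <= rho <= 1 ->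
  exists P : dgp R, dgp_valid P /\ (0 < varS P /\ 0 < varO P) /\
    0 < E_oracle P - E_random P /\ corrSO P = r /\ recovery P = rho.
Proof.
move=> /andP [r0 r1] /andP [h0 h1].
set Q := rho ^+ 2 + (1 - rho) ^+ 2.
set x := r / 2.
set W := (Q - x ^+ 2) / 2.
set A := r * (2 * Q - rho) / (4 * (1 - r)).
have hQ : 1/2 <= Q by rewrite /Q; have := sqr_ge0 (2*rho - 1); rewrite !expr2; nra.
have hW : 0 <= W.
  rewrite /W /x; apply: divr_ge0 => //; nra.
have hA : 0 <= A.
  rewrite /A; apply: divr_ge0; last by nra.
  apply: mulr_ge0; first lra. rewrite /Q; nra.
set w := Num.sqrt W.
set a := Num.sqrt A.
have hw2 : w ^+ 2 = W by rewrite sqr_sqrtr.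
have ha2 : a ^+ 2 = A by rewrite sqr_sqrtr.
have hw0 : 0 <= w by apply: sqrtr_ge0.
have hx0 : 0 < x by rewrite /x; lra.
exists (@mkP R a w x rho).
have hVS : varS (@mkP R a w x rho) = A/2 + Q/4.
  by rewrite varS_eq hw2 ha2 /W; field.
have hVO : varO (@mkP R a w x rho) = A/2 + Q/4.
  by rewrite varO_eq ha2.
have hV : 0 < A/2 + Q/4 by lra.
have hC : covSO (@mkP R a w x rho) = r * (A/2 + Q/4).
  by rewrite cov_eq ha2; apply: covalg.
have hO : E_oracle (@mkP R a w x rho) = 1/4 by apply: Eoracle_eq; rewrite h0 h1.
have hJ : E_judge (@mkP R a w x rho) = rho/4 by apply: Ejudge_eq.
rewrite /recovery hO hJ Erand_eq.
split.
  split => //; split.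
    move=> i; rewrite /= /sel3.
    by case: (nat_of_ord i == 0%N); last case: (nat_of_ord i == 1%N); lra.
  rewrite /= !big_ord_recl big_ord0 /= /sel3 /=; by field.
split; first by rewrite hVS hVO.
split; first lra.
split; last by field.
rewrite /corrSO hVS hVO hC -expr2 sqrtr_sqr ger0_norm; last lra.
field; lra.
Qed.

Theorem mainTheorem1 (R : realType) (r rho1 rho2 : R) :
  0 < r < 1 -> 0 <= rho1 -> rho1 < rho2 -> rho2 <= 1 ->
  exists P1 P2 : dgp R,
    (dgp_valid P1 /\ dgp_valid P2) /\
    (0 < varS P1 /\ 0 < varO P1 /\ 0 < varS P2 /\ 0 < varO P2) /\
    (0 < E_oracle P1 - E_random P1 /\ 0 < E_oracle P2 - E_random P2) /\
    (corrSO P1 = r /\ corrSO P2 = r) /\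
    (recovery P1 = rho1 /\ recovery P2 = rho2).
Proof.
move=> hr h1 h12 h2.
have hr1 : 0 <= rho1 <= 1 by apply/andP; split; lra.
have hr2 : 0 <= rho2 <= 1 by apply/andP; split; lra.
have [P1 [v1 [[s1 o1] [e1 [c1 rc1]]]]] := @construct R r rho1 hr hr1.
have [P2 [v2 [[s2 o2] [e2 [c2 rc2]]]]] := @construct R r rho2 hr hr2.
by exists P1, P2.
Qed.
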